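(* Let $p>1$ and $x\in(0,1)$. Then $$\arcsin_p\left(\frac{x}{\sqrt[p]{1+x^p}}\right)=\arctan_p(x),\qquad \arcsin_p(x)=\arctan_p\left(\frac{x}{\sqrt[p]{1-x^p}}\right),$$ $$\arccos_p(x)=\arctan_p\left(\frac{\sqrt[p]{1-x^p}}{x}\right),\qquad \arccos_p\left(\frac{1}{\sqrt[p]{1+x^p}}\right)=\arctan_p(x).$$
   Context: For $p>1$: $\arcsin_p y=\int_0^y(1-t^p)^{-1/p}dt$ for $y\in(0,1)$; $\arccos_p y=\arcsin_p\bigl((1-y^p)^{1/p}\bigr)$ for $y\in(0,1)$; $\arctan_p y=\int_0^y(1+t^p)^{-1}dt$ for $y\ge0$. *)

(* Defs.v *)
From Stdlib Require Import Reals.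
From Coquelicot Require Import Coquelicot.
Open Scope R_scope.

(* Real power x^a: exp(a ln x) for x > 0, and 0 for x <= 0
   (only ever evaluated at x >= 0 here; gives 0^a = 0 for a > 0). *)
Definition rpow (x a : R) : R :=
  if Rlt_dec 0 x then Rpower x a else 0.

Definition arcsin_p (p y : R) : R :=
  RInt (fun t => rpow (1 - rpow t p) (- / p)) 0 y.

Definition arccos_p (p y : R) : R :=
  arcsin_p p (rpow (1 - rpow y p) (/ p)).

Definition arctan_p (p y : R) : R :=
  RInt (fun t => / (1 + rpow t p)) 0 y.

(* Main.v *)
Require Import Defs.
From Stdlib Require Import Reals Lra.
From Coquelicot Require Import Coquelicot.
Open Scope R_scope.

Lemma rpow_pos x a : 0 < x -> rpow x a = Rpower x a.
Proof. intro h; unfold rpow; destruct (Rlt_dec 0 x); [reflexivity|lra]. Qed.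

Lemma rpow_np x a : x <= 0 -> rpow x a = 0.
Proof. intro h; unfold rpow; destruct (Rlt_dec 0 x); [lra|reflexivity]. Qed.

Lemma Rpower_gt0 x a : 0 < Rpower x a.
Proof. unfold Rpower; apply exp_pos. Qed.

Lemma rpow_ge0 x a : 0 <= rpow x a.
Proof. unfold rpow; destruct (Rlt_dec 0 x); [apply Rlt_le, Rpower_gt0|lra]. Qed.

Lemma Rpower_1base a : Rpower 1 a = 1.
Proof. unfold Rpower; rewrite ln_1, Rmult_0_r; apply exp_0. Qed.

Lemma is_derive_rpow x a : 0 < x ->
  is_derive (fun t => rpow t a) x (a * Rpower x (a - 1)).
Proof.
  intro hx.
  apply is_derive_ext_loc with (f := fun t => Rpower t a).
  - exists (mkposreal x hx); intros y hy.
    rewrite rpow_pos; [reflexivity|].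
    unfold ball in hy; simpl in hy; unfold AbsRing_ball, abs, minus, plus, opp in hy; simpl in hy.
    apply Rabs_def2 in hy; lra.
  - apply is_derive_Reals, derivable_pt_lim_power; exact hx.
Qed.

Lemma rpow_cont_pos x a : 0 < x -> continuous (fun t => rpow t a) x.
Proof.
  intro hx; apply (ex_derive_continuous (K:=R_AbsRing) (V:=R_NormedModule)); eexists; apply is_derive_rpow; exact hx.
Qed.

Lemma rpow_cont p t : 0 < p -> continuous (fun t => rpow t p) t.
Proof.
  intro hp.
  destruct (Rlt_dec 0 t) as [ht|ht]; [apply rpow_cont_pos; exact ht|].
  destruct (Rlt_dec t 0) as [ht'|ht'].
  - apply continuous_ext_loc with (g := fun _ => 0).
    + exists (mkposreal (-t) ltac:(lra)); intros y hy.
      unfold ball in hy; simpl in hy; unfold AbsRing_ball, abs, minus, plus, opp in hy; simpl in hy.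
      apply Rabs_def2 in hy; rewrite rpow_np; [reflexivity|lra].
    + apply continuous_const.
  - assert (t = 0) by lra; subst t.
    apply continuity_pt_filterlim.
    intros eps heps.
    exists (Rpower eps (/p)); split; [apply Rpower_gt0|].
    intros y [_ hy]. simpl in hy; unfold R_dist in hy.
    rewrite (rpow_np 0) by lra. simpl; unfold R_dist.
    rewrite !Rminus_0_r in *.
    idtac.
    destruct (Rlt_dec 0 y) as [hy0|hy0].
    + rewrite rpow_pos by lra. rewrite Rabs_pos_eq by (apply Rlt_le, Rpower_gt0).
      rewrite Rabs_pos_eq in hy by lra.
      replace eps with (Rpower (Rpower eps (/p)) p).
      * apply Rlt_Rpower_l; lra.
      * rewrite Rpower_mult, Rinv_l by lra. apply Rpower_1; lra.
    + rewrite rpow_np by lra; rewrite Rabs_R0; lra.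
Qed.
Lemma rpow_lt1 p t : 0 < p -> t < 1 -> rpow t p < 1.
Proof.
  intros hp ht. destruct (Rlt_dec 0 t).
  - rewrite rpow_pos by lra. rewrite <- (Rpower_1base p). apply Rlt_Rpower_l; lra.
  - rewrite rpow_np by lra; lra.
Qed.

Definition fS p t := rpow (1 - rpow t p) (- / p).
Definition fT p t := / (1 + rpow t p).

Lemma fS_cont p t : 0 < p -> t < 1 -> continuous (fS p) t.
Proof.
  intros hp ht. unfold fS.
  apply (continuous_comp (fun t => 1 - rpow t p) (fun u => rpow u (-/p))).
  - apply (continuous_minus (fun _ => 1) (fun t => rpow t p)).
    + apply continuous_const.
    + apply rpow_cont; exact hp.
  - apply rpow_cont_pos. pose proof (rpow_lt1 p t hp ht); lra.
Qed.

Lemma fT_cont p t : 0 < p -> continuous (fT p) t.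
Proof.
  intros hp. unfold fT.
  apply (continuous_Rinv_comp (fun t => 1 + rpow t p)).
  - apply (continuous_plus (fun _ => 1) (fun t => rpow t p)).
    + apply continuous_const.
    + apply rpow_cont; exact hp.
  - pose proof (rpow_ge0 t p); lra.
Qed.

Lemma arcsin_derive p y : 0 < p -> y < 1 -> is_derive (arcsin_p p) y (fS p y).
Proof.
  intros hp hy. apply (is_derive_RInt (fS p) (arcsin_p p) 0).
  - exists (mkposreal (1 - y) ltac:(lra)); intros b hb.
    unfold ball in hb; simpl in hb; unfold AbsRing_ball, abs, minus, plus, opp in hb; simpl in hb.
    apply Rabs_def2 in hb.
    apply (RInt_correct (fS p)). apply ex_RInt_continuous. intros z hz.
    apply fS_cont; [exact hp|]. pose proof (Rmax_lub_lt 0 b 1 ltac:(lra) ltac:(lra)). lra.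
  - apply fS_cont; assumption.
Qed.

Lemma arctan_derive p y : 0 < p -> is_derive (arctan_p p) y (fT p y).
Proof.
  intros hp. apply (is_derive_RInt (fT p) (arctan_p p) 0).
  - exists (mkposreal 1 ltac:(lra)); intros b hb.
    apply (RInt_correct (fT p)). apply ex_RInt_continuous. intros z hz.
    apply fT_cont; exact hp.
  - apply fT_cont; assumption.
Qed.

Lemma is_derive_eq (f : R -> R) x l l' : is_derive f x l -> l = l' -> is_derive f x l'.
Proof. intros h e; subst; exact h. Qed.

Lemma Rpower_inv x a : 0 < x -> Rpower (/ x) a = / Rpower x a.
Proof. intro hx; unfold Rpower; rewrite ln_Rinv by exact hx.
  rewrite <- exp_Ropp; f_equal; ring. Qed.

Lemma Rpower_pinv x p : 0 < x -> 0 < p -> Rpower (Rpower x (/p)) p = x.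
Proof. intros hx hp; rewrite Rpower_mult, Rinv_l by lra; apply Rpower_1; exact hx. Qed.

Lemma Rpower_pinv' x p : 0 < x -> 0 < p -> Rpower (Rpower x p) (/p) = x.
Proof. intros hx hp; rewrite Rpower_mult, Rinv_r by lra; apply Rpower_1; exact hx. Qed.

Lemma Rpower_m1 x a : 0 < x -> Rpower x (a - 1) = Rpower x a / x.
Proof. intro hx. unfold Rminus; rewrite Rpower_plus, Rpower_Ropp, Rpower_1 by exact hx.
  reflexivity. Qed.

Definition gg p t := t / rpow (1 + rpow t p) (/p).

Lemma gg_lt1 p t : 0 < p -> gg p t < 1.
Proof.
  intro hp. unfold gg.
  assert (hU : 0 < 1 + rpow t p) by (pose proof (rpow_ge0 t p); lra).
  rewrite (rpow_pos (1 + rpow t p)) by exact hU.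
  pose proof (Rpower_gt0 (1 + rpow t p) (/p)) as hV.
  apply (Rmult_lt_reg_r (Rpower (1 + rpow t p) (/ p))); [exact hV|].
  unfold Rdiv; rewrite Rmult_assoc, Rinv_l, Rmult_1_r, Rmult_1_l by lra.
  destruct (Rlt_dec 0 t) as [ht|ht]; [|lra].
  rewrite rpow_pos by exact ht.
  rewrite <- (Rpower_pinv' t p) at 1 by assumption.
  apply Rlt_Rpower_l; [apply Rinv_0_lt_compat; exact hp|].
  split; [apply Rpower_gt0|lra].
Qed.

Lemma Phi_derive p t : 1 < p -> 0 < t ->
  is_derive (fun s => arcsin_p p (gg p s) - arctan_p p s) t 0.
Proof.
  intros hp ht.
  set (A := Rpower t p). set (U := 1 + A). set (V := Rpower U (/p)).
  assert (hA : 0 < A) by apply Rpower_gt0.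
  assert (hU : 0 < U) by (unfold U; lra).
  assert (hV : 0 < V) by apply Rpower_gt0.
  assert (hin : is_derive (fun s => 1 + rpow s p) t (p * Rpower t (p - 1))).
  { eapply is_derive_eq.
    - apply (is_derive_plus (fun _ => 1) (fun s => rpow s p)).
      + apply is_derive_const.
      + apply is_derive_rpow; exact ht.
    - simpl. unfold plus, zero; simpl. ring. }
  assert (hUt : 1 + rpow t p = U) by (unfold U, A; rewrite rpow_pos by exact ht; reflexivity).
  assert (hVd : is_derive (fun s => rpow (1 + rpow s p) (/p)) t
                  ((p * Rpower t (p - 1)) * (/p * Rpower U (/p - 1)))).
  { eapply is_derive_eq.
    - apply (is_derive_comp (fun u => rpow u (/p)) (fun s => 1 + rpow s p)).
      + rewrite hUt. apply is_derive_rpow; exact hU.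
      + exact hin.
    - reflexivity. }
  assert (hVt : rpow (1 + rpow t p) (/p) = V) by (rewrite hUt; unfold V; apply rpow_pos; exact hU).
  assert (hg : is_derive (gg p) t
     ((1 * V - t * ((p * Rpower t (p - 1)) * (/p * Rpower U (/p - 1)))) / V ^ 2)).
  { eapply is_derive_eq.
    - apply (is_derive_div (fun s => s) (fun s => rpow (1 + rpow s p) (/p))).
      + apply is_derive_id.
      + exact hVd.
      + rewrite hVt; lra.
    - rewrite hVt. reflexivity. }
  assert (hgt : gg p t = t / V) by (unfold gg; rewrite hVt; reflexivity).
  assert (hg1 : gg p t < 1) by (apply gg_lt1; lra).
  eapply is_derive_eq.
  - apply (is_derive_minus (fun s => arcsin_p p (gg p s)) (arctan_p p)).
    + apply (is_derive_comp (arcsin_p p) (gg p)).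
      * apply arcsin_derive; [lra|exact hg1].
      * exact hg.
    + apply arctan_derive; lra.
  - assert (hgp : rpow (gg p t) p = A / U).
    { rewrite hgt, rpow_pos.
      2: { apply Rdiv_lt_0_compat; assumption. }
      unfold Rdiv. rewrite <- Rpower_mult_distr by (try apply Rinv_0_lt_compat; assumption).
      rewrite Rpower_inv by exact hV. unfold V. rewrite Rpower_pinv by lra. reflexivity. }
    assert (hfS : fS p (gg p t) = V).
    { unfold fS. rewrite hgp.
      replace (1 - A / U) with (/ U) by (unfold U; field; lra).
      rewrite rpow_pos by (apply Rinv_0_lt_compat; exact hU).
      rewrite Rpower_inv, Rpower_Ropp by exact hU. rewrite Rinv_inv. reflexivity. }
    assert (hfT : fT p t = / U) by (unfold fT; rewrite hUt; reflexivity).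
    rewrite hfS, hfT.
    rewrite (Rpower_m1 U) by exact hU. rewrite (Rpower_m1 t) by exact ht.
    fold A. fold V.
    unfold minus, plus, opp, scal; simpl. unfold mult; simpl.
    unfold U. field. split; [lra|]. split; [lra|]. split; [lra|]. lra.
Qed.

Lemma gg_cont p t : 0 < p -> continuous (gg p) t.
Proof.
  intro hp. unfold gg, Rdiv.
  apply (continuous_mult (fun s => s) (fun s => / rpow (1 + rpow s p) (/p))).
  - apply continuous_id.
  - apply (continuous_Rinv_comp (fun s => rpow (1 + rpow s p) (/p))).
    + assert (hU : 0 < 1 + rpow t p) by (pose proof (rpow_ge0 t p); lra).
      apply (continuous_comp (fun s => 1 + rpow s p) (fun u => rpow u (/p))).
      * apply (continuous_plus (fun _ => 1) (fun t => rpow t p)).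
        -- apply continuous_const.
        -- apply rpow_cont; exact hp.
      * apply rpow_cont_pos; exact hU.
    + assert (hU : 0 < 1 + rpow t p) by (pose proof (rpow_ge0 t p); lra).
      rewrite rpow_pos by exact hU. pose proof (Rpower_gt0 (1 + rpow t p) (/p)); lra.
Qed.

Lemma core p x : 1 < p -> 0 <= x -> arcsin_p p (gg p x) = arctan_p p x.
Proof.
  intros hp hx.
  assert (h0 : arcsin_p p (gg p 0) - arctan_p p 0 = 0).
  { unfold gg, Rdiv; rewrite Rmult_0_l. unfold arcsin_p, arctan_p.
    rewrite !RInt_point. unfold zero; simpl; ring. }
  destruct (Req_dec x 0) as [e|hne]; [subst x; lra|].
  destruct (MVT_gen (fun s => arcsin_p p (gg p s) - arctan_p p s) 0 x (fun _ => 0)) as [c [_ hc]].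
  - intros y hy. rewrite Rmin_left, Rmax_right in hy by lra.
    apply Phi_derive; lra.
  - intros y _. apply continuity_pt_filterlim.
    apply (continuous_minus (fun s => arcsin_p p (gg p s)) (arctan_p p)).
    + apply (continuous_comp (gg p) (arcsin_p p)).
      * apply gg_cont; lra.
      * apply (ex_derive_continuous (K:=R_AbsRing) (V:=R_NormedModule)); eexists.
        apply arcsin_derive; [lra|]. apply gg_lt1; lra.
    + apply (ex_derive_continuous (K:=R_AbsRing) (V:=R_NormedModule)); eexists.
      apply arctan_derive; lra.
  - lra.
Qed.

Lemma Rpower_div x W a : 0 < x -> 0 < W -> Rpower (x / W) a = Rpower x a / Rpower W a.
Proof. intros hx hW. unfold Rdiv. rewrite <- Rpower_mult_distr by (try apply Rinv_0_lt_compat; assumption).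
  rewrite Rpower_inv by exact hW. reflexivity. Qed.

Lemma claim2 p x : 1 < p -> 0 < x < 1 ->
  arcsin_p p x = arctan_p p (x / rpow (1 - rpow x p) (/ p)).
Proof.
  intros hp hx.
  assert (hA1 : Rpower x p < 1) by (rewrite <- (Rpower_1base p); apply Rlt_Rpower_l; lra).
  assert (hA0 : 0 < Rpower x p) by apply Rpower_gt0.
  rewrite (rpow_pos x) by lra. rewrite rpow_pos by lra.
  set (A := Rpower x p) in *. set (W := Rpower (1 - A) (/p)).
  assert (hW : 0 < W) by apply Rpower_gt0.
  rewrite <- core by (try lra; apply Rlt_le, Rdiv_lt_0_compat; lra).
  f_equal. unfold gg.
  rewrite (rpow_pos (x / W)) by (apply Rdiv_lt_0_compat; lra).
  rewrite Rpower_div by lra. fold A. unfold W. rewrite Rpower_pinv by lra.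
  replace (1 + A / (1 - A)) with (/ (1 - A)) by (field; lra).
  rewrite rpow_pos by (apply Rinv_0_lt_compat; lra).
  rewrite Rpower_inv by lra. fold W. field. lra.
Qed.

Theorem lemma3p7 (p x : R) (hp : 1 < p) (hx : 0 < x < 1) :
  arcsin_p p (x / rpow (1 + rpow x p) (/ p)) = arctan_p p x /\
  arcsin_p p x = arctan_p p (x / rpow (1 - rpow x p) (/ p)) /\
  arccos_p p x = arctan_p p (rpow (1 - rpow x p) (/ p) / x) /\
  arccos_p p (1 / rpow (1 + rpow x p) (/ p)) = arctan_p p x.
Proof.
  assert (c1 : arcsin_p p (x / rpow (1 + rpow x p) (/ p)) = arctan_p p x)
    by (apply (core p x); lra).
  assert (hA1 : Rpower x p < 1) by (rewrite <- (Rpower_1base p); apply Rlt_Rpower_l; lra).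
  assert (hA0 : 0 < Rpower x p) by apply Rpower_gt0.
  split; [exact c1|]. split; [apply claim2; assumption|]. split.
  - unfold arccos_p.
    rewrite (rpow_pos x) by lra. rewrite rpow_pos by lra.
    set (A := Rpower x p) in *. set (W := Rpower (1 - A) (/p)).
    assert (hW : 0 < W) by apply Rpower_gt0.
    assert (hW1 : W < 1) by (unfold W; rewrite <- (Rpower_1base (/p)) at 2;
      apply Rlt_Rpower_l; [apply Rinv_0_lt_compat|]; lra).
    rewrite claim2 by (try split; lra). f_equal.
    rewrite (rpow_pos W) by lra. unfold W at 2. rewrite Rpower_pinv by lra.
    replace (1 - (1 - A)) with A by ring.
    rewrite rpow_pos by lra. unfold A. rewrite Rpower_pinv' by lra. reflexivity.
  - unfold arccos_p. rewrite <- c1. f_equal.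
    rewrite (rpow_pos x) by lra.
    assert (hU : 0 < 1 + Rpower x p) by lra.
    rewrite (rpow_pos (1 + Rpower x p)) by lra.
    set (A := Rpower x p) in *. set (V := Rpower (1 + A) (/p)).
    assert (hV : 0 < V) by apply Rpower_gt0.
    rewrite (rpow_pos (1 / V)) by (apply Rdiv_lt_0_compat; lra).
    rewrite Rpower_div by lra. rewrite Rpower_1base. unfold V at 1. rewrite Rpower_pinv by lra.
    replace (1 - 1 / (1 + A)) with (A / (1 + A)) by (field; lra).
    rewrite rpow_pos by (apply Rdiv_lt_0_compat; lra).
    rewrite Rpower_div by lra. unfold A. rewrite Rpower_pinv' by lra. reflexivity.
Qed.
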